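(* Let $g\in\mathcal{S}'(\mathbb{R})$ be supported in $[0,\infty)$ and let $a,b$ be constants. Suppose that, as $\lambda\to\infty$, $$g(\lambda x)=a\frac{\delta(x)}{\lambda}+b\frac{\log\lambda}{\lambda}\delta(x)+\frac{b}{\lambda}\operatorname{Pf}\left(\frac{H(x)}{x}\right)+o\left(\frac{1}{\lambda}\right)\quad\text{in }\mathcal{S}'(\mathbb{R}).$$ Then $$\mathcal{L}\{g;y\}=a-b\gamma+b\log\left(\frac{1}{y}\right)+o(1),\qquad y\to 0^+,$$ where $\gamma$ is Euler's constant.
   Context: $\delta$ is the Dirac delta and $H$ the Heaviside function (characteristic function of $[0,\infty)$). The distribution $\operatorname{Pf}(H(x)/x)$ is defined by $\langle \operatorname{Pf}(H(x)/x),\phi\rangle=\int_0^1\frac{\phi(x)-\phi(0)}{x}\,dx+\int_1^\infty\frac{\phi(x)}{x}\,dx$. For a distribution $g$, $g(\lambda x)$ is the distribution $\phi\mapsto \lambda^{-1}\langle g(x),\phi(x/\lambda)\rangle$. An asymptotic relation ''$g(\lambda x)=c_1(\lambda)g_1(x)+c_2(\lambda)g_2(x)+o(c_2(\lambda))$ in $\mathcal{S}'(\mathbb{R})$'' means that for every $\phi\in\mathcal{S}(\mathbb{R})$, $\langle g(\lambda x),\phi(x)\rangle=c_1(\lambda)\langle g_1,\phi\rangle+c_2(\lambda)\langle g_2,\phi\rangle+o(c_2(\lambda))$. For $g\in\mathcal{S}'(\mathbb{R})$ supported in $[0,\infty)$, its Laplace transform is $\mathcal{L}\{g;y\}=\langle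 g(x),e^{-yx}\rangle$, $y>0$ (well defined since $g$ is supported in $[0,\infty)$). *)

(* Defs.v *)
From Stdlib Require Import Reals Lra.
From Coquelicot Require Import Coquelicot.
Open Scope R_scope.

Definition smooth (f : R -> R) : Prop :=
  forall (n : nat) (x : R), ex_derive (Derive_n f n) x.

Definition schwartz (f : R -> R) : Prop :=
  smooth f /\
  forall k n : nat, exists C : R, forall x : R,
    Rabs x ^ k * Rabs (Derive_n f n x) <= C.

(* Tempered distributions: linear functionals on S(R), continuous for the
   Schwartz topology, i.e. bounded by a finite combination of the seminorms
   sup_x |x|^k |f^(n)(x)|, k,n <= N. *)
Definition tempered (T : (R -> R) -> R) : Prop :=
  (forall f h, schwartz f -> schwartz h -> T (fun x => f x + h x) = T f + T h) /\
  (forall (c : R) f, schwartz f -> T (fun x => c * f x) = c * T f) /\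
  (exists (C : R) (N : nat), forall f (M : R), schwartz f ->
     (forall k n : nat, (k <= N)%nat -> (n <= N)%nat -> forall x : R,
        Rabs x ^ k * Rabs (Derive_n f n x) <= M) ->
     Rabs (T f) <= C * M).

(* supp T is contained in [0, +oo): T vanishes on every smooth test function
   with compact support contained in (-oo, 0). *)
Definition supported_nonneg (T : (R -> R) -> R) : Prop :=
  forall f : R -> R, smooth f ->
    (exists L r : R, r < 0 /\ forall x, (x <= L \/ r <= x) -> f x = 0) ->
    T f = 0.

(* The dilated distribution g(lambda x): phi |-> lambda^{-1} <g, phi(x/lambda)>. *)
Definition dilate (T : (R -> R) -> R) (lam : R) : (R -> R) -> R :=
  fun f => / lam * T (fun x => f (x / lam)).

Definition dirac (f : R -> R) : R := f 0.

Definition pf_H_over_x (f : R -> R) : R :=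
  RInt (fun x => (f x - f 0) / x) 0 1
  + real (Lim (fun M => RInt (fun x => f x / x) 1 M) p_infty).

(* Cutoffs used to define <g(x), e^{-yx}> for g supported in [0,oo):
   smooth, equal to 1 on a neighbourhood [-e, oo) of [0,oo), zero near -oo. *)
Definition cutoff (rho : R -> R) : Prop :=
  smooth rho /\
  (exists e : R, 0 < e /\ forall x, - e <= x -> rho x = 1) /\
  (exists L : R, forall x, x <= L -> rho x = 0).

(* Laplace transform L{g; y} = <g(x), rho(x) e^{-yx}> (independent of the
   cutoff rho when supp g is in [0,oo)). *)
Definition laplace (T : (R -> R) -> R) (rho : R -> R) (y : R) : R :=
  T (fun x => rho x * exp (- (y * x))).

Definition euler_gamma : R :=
  real (Lim_seq (fun n => sum_f_R0 (fun k => / INR (S k)) n - ln (INR (S n)))).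

(* Main.v *)
Require Import Defs.
From Stdlib Require Import Reals Lra Lia FunctionalExtensionality.
From Coquelicot Require Import Coquelicot.
Open Scope R_scope.

Fixpoint Ck (n : nat) (f : R -> R) : Prop :=
  match n with
  | O => True
  | S n => (forall x, ex_derive f x) /\ Ck n (Derive f)
  end.

Lemma Ck_ext n f g : (forall x, f x = g x) -> Ck n f -> Ck n g.
Proof. intros H; replace g with f; auto. apply functional_extensionality; auto. Qed.

Lemma Dn_S k f : Derive_n (Derive f) k = Derive_n f (S k).
Proof. induction k; simpl; auto. rewrite IHk. reflexivity. Qed.

Lemma Ck_iff n : forall f, Ck n f <-> (forall k x, (k < n)%nat -> ex_derive (Derive_n f k) x).
Proof.
  induction n; intros f; simpl; split.
  - intros _ k x H; lia.
  - auto.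
  - intros [H1 H2] k x Hk. destruct k. simpl; auto.
    rewrite <- Dn_S. apply IHn; auto. lia.
  - intros H. split. intros x. apply (H 0%nat x). lia.
    apply IHn. intros k x Hk. rewrite Dn_S. apply H. lia.
Qed.

Lemma smooth_Ck f : smooth f <-> forall n, Ck n f.
Proof.
  split.
  - intros H n. apply Ck_iff. intros; apply H.
  - intros H n x. apply (proj1 (Ck_iff (S n) f) (H (S n)) n x). lia.
Qed.

Lemma Ck_mono n : forall f, Ck (S n) f -> Ck n f.
Proof.
  induction n; simpl; auto. intros f [H1 [H2 H3]]. split; auto. apply IHn. simpl; auto.
Qed.

Lemma Ck_plus n : forall f g, Ck n f -> Ck n g -> Ck n (fun x => f x + g x).
Proof.
  induction n; simpl; auto. intros f g [F1 F2] [G1 G2]. split.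
  intros x; apply (ex_derive_plus f g x); auto.
  apply Ck_ext with (fun x => Derive f x + Derive g x).
  intros x; rewrite Derive_plus; auto. auto.
Qed.

Lemma Ck_scal n : forall c f, Ck n f -> Ck n (fun x => c * f x).
Proof.
  induction n; simpl; auto. intros c f [F1 F2]. split.
  intros x; apply (ex_derive_scal f c x); auto.
  apply Ck_ext with (fun x => c * Derive f x).
  intros x; rewrite Derive_scal; auto. auto.
Qed.

Lemma Ck_mult n : forall f g, Ck n f -> Ck n g -> Ck n (fun x => f x * g x).
Proof.
  induction n; simpl; auto. intros f g [F1 F2] [G1 G2]. split.
  intros x; apply (ex_derive_mult f g x); auto.
  apply Ck_ext with (fun x => Derive f x * g x + f x * Derive g x).
  intros x; rewrite Derive_mult; auto.
  apply Ck_plus; apply IHn; auto; apply Ck_mono; simpl; auto.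
Qed.

Lemma Ck_comp_scal n : forall c f, Ck n f -> Ck n (fun x => f (x * c)).
Proof.
  induction n; simpl; auto. intros c f [F1 F2]. split.
  intros x. apply (ex_derive_comp f (fun x => x * c)); auto. auto_derive; auto.
  apply Ck_ext with (fun x => c * Derive f (x * c)).
  intros x. rewrite (Derive_comp f (fun x => x * c)); auto.
  f_equal. symmetry. apply is_derive_unique. auto_derive; auto. ring. auto_derive; auto.
  apply Ck_scal. apply IHn; auto.
Qed.

Lemma Ck_const n : forall c, Ck n (fun _ => c).
Proof.
  induction n; simpl; auto. intros c. split. intros; auto_derive; auto.
  apply Ck_ext with (fun _ => 0). intros x; rewrite Derive_const; auto. auto.
Qed.

Lemma Ck_exp n : Ck n exp.
Proof.
  induction n; simpl; auto. split. intros; auto_derive; auto.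
  apply Ck_ext with exp; auto. intros x. symmetry. apply is_derive_unique. auto_derive; auto. ring.
Qed.

Lemma smooth_prod_exp (s : R -> R) y : smooth s -> smooth (fun x => s x * exp (- (y * x))).
Proof.
  rewrite !smooth_Ck. intros H n. apply Ck_mult; auto.
  apply Ck_ext with (fun x => exp (x * (-y))). intros; f_equal; ring.
  apply Ck_comp_scal, Ck_exp.
Qed.

Lemma exp_pow_INR n s : exp (INR n * s) = exp s ^ n.
Proof.
  induction n. simpl. rewrite Rmult_0_l, exp_0; auto.
  rewrite S_INR, Rmult_plus_distr_r, Rmult_1_l, exp_plus, IHn. simpl. ring.
Qed.

Lemma pow_exp_bound k : forall t, 0 <= t -> t ^ k * exp (- t) <= INR (S k) ^ k.
Proof.
  intros t Ht. set (K := INR (S k)). assert (HK : 0 < K) by (apply lt_0_INR; lia).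
  set (s := t / K). assert (Hs : 0 <= s) by (unfold s; apply Rdiv_le_0_compat; lra).
  assert (Ht' : t = K * s) by (unfold s; field; lra).
  assert (H1 : s ^ k <= exp s ^ k). { apply pow_incr. split; auto. generalize (exp_ineq1_le s); lra. }
  rewrite <- exp_pow_INR in H1.
  assert (H2 : exp (INR k * s) <= exp t).
  { assert (Hks : INR k * s <= t) by (rewrite Ht'; unfold K; rewrite S_INR; nra).
    destruct (Rle_lt_or_eq_dec _ _ Hks) as [Hl|He]; [left; apply exp_increasing; auto | rewrite He; lra]. }
  rewrite Ht', Rpow_mult_distr.
  assert (0 < exp (- (K * s))) by apply exp_pos.
  assert (exp (- (K * s)) * exp (K*s) = 1) by (rewrite <- exp_plus; replace (- (K * s) + K * s) with 0 by ring; apply exp_0).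
  rewrite <- Ht' in *.
  assert (0 < K ^ k) by (apply pow_lt; auto).
  apply Rle_trans with (K ^ k * (exp t * exp (- t))). 2: rewrite Rmult_comm in H0; rewrite H0; lra.
  rewrite Rmult_assoc. apply Rmult_le_compat_l. lra. apply Rmult_le_compat_r. lra. lra.
Qed.

Lemma Dn_zero n x : Derive_n (fun _ => 0) n x = 0.
Proof. destruct n; simpl. auto. apply (Derive_n_const n 0 x). Qed.

Lemma Dn_exp c y n : Derive_n (fun x => c * exp (- (y * x))) n = fun x => c * (-y) ^ n * exp (- (y * x)).
Proof.
  induction n; simpl. apply functional_extensionality; intros; ring.
  rewrite IHn. apply functional_extensionality; intros x. apply is_derive_unique. auto_derive; auto. ring.
Qed.

Lemma schwartz_prod_exp (s : R -> R) (y c L E : R) :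
  smooth s -> 0 < y -> (forall x, x <= L -> s x = 0) -> (forall x, E <= x -> s x = c) ->
  schwartz (fun x => s x * exp (- (y * x))).
Proof.
  intros Hs Hy HL HE. set (F := fun x => s x * exp (- (y * x))).
  assert (HF : smooth F) by (apply smooth_prod_exp; auto).
  split; auto. intros k n.
  set (a := Rmin L 0). set (b := Rmax E 0).
  assert (Hab : a <= b) by (unfold a, b; generalize (Rmin_r L 0) (Rmax_r E 0); lra).
  set (G := fun x => Rabs x ^ k * Rabs (Derive_n F n x)).
  assert (Gc : forall x, continuous G x).
  { intros x. unfold G. apply (continuous_mult (fun x => Rabs x ^ k) (fun x => Rabs (Derive_n F n x))).
    apply (continuous_comp Rabs (fun t => t ^ k)). apply continuous_Rabs.
    apply (ex_derive_continuous (fun t => t ^ k)). auto_derive; auto.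
    apply continuous_Rabs_comp. apply (ex_derive_continuous (Derive_n F n)). apply HF. }
  destruct (bounded_continuity G a b) as [M1 HM1]. { intros; apply Gc. }
  exists (Rmax M1 (Rabs c * Rabs y ^ n / y ^ k * INR (S k) ^ k)).
  intros x. fold (G x).
  destruct (Rlt_le_dec x a) as [Hxa|Hxa].
  -
    assert (D : Derive_n F n x = Derive_n (fun _ => 0) n x).
    { apply Derive_n_ext_loc. apply (locally_interval _ x m_infty a); simpl; auto.
      intros t _ Ht. unfold F. rewrite HL. ring. unfold a in Ht. generalize (Rmin_l L 0); lra. }
    unfold G. rewrite D, Dn_zero, Rabs_R0, Rmult_0_r.
    apply Rle_trans with M1. 2: apply Rmax_l.
    assert (HH := HM1 a (conj (Rle_refl a) Hab)). unfold norm in HH; simpl in HH. unfold abs in HH; simpl in HH.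
    generalize (Rabs_pos (G a)); lra.
  - destruct (Rle_lt_dec x b) as [Hxb|Hxb].
    + apply Rle_trans with M1. 2: apply Rmax_l.
      assert (HH := HM1 x (conj Hxa Hxb)). unfold norm in HH; simpl in HH. unfold abs in HH; simpl in HH.
      generalize (Rle_abs (G x)); lra.
    + assert (D : Derive_n F n x = Derive_n (fun x => c * exp (- (y * x))) n x).
      { apply Derive_n_ext_loc. apply (locally_interval _ x b p_infty); simpl; auto.
        intros t Ht _. unfold F. rewrite HE. ring. unfold b in Ht. generalize (Rmax_l E 0); lra. }
      apply Rle_trans with (2 := Rmax_r _ _).
      unfold G. rewrite D, Dn_exp.
      assert (Hx0 : 0 < x) by (unfold b in Hxb; generalize (Rmax_r E 0); lra).
      rewrite Rabs_pos_eq by lra. assert (Hay : Rabs ((- y) ^ n) = Rabs y ^ n) by (rewrite <- RPow_abs, Rabs_Ropp; auto).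
      rewrite !Rabs_mult, Hay, (Rabs_pos_eq (exp _)) by (left; apply exp_pos).
      assert (HB := pow_exp_bound k (y * x) ltac:(nra)).
      rewrite Rpow_mult_distr in HB.
      assert (0 < y ^ k) by (apply pow_lt; auto).
      assert (0 <= Rabs c * Rabs y ^ n) by (apply Rmult_le_pos; [apply Rabs_pos| apply pow_le, Rabs_pos]).
      unfold Rdiv. apply Rle_trans with (Rabs c * Rabs y ^ n * / y ^ k * (y ^ k * x ^ k * exp (- (y * x)))).
      right. field. lra.
      apply Rmult_le_compat_l. apply Rmult_le_pos; auto. left; apply Rinv_0_lt_compat; auto. auto.
Qed.

Definition pp (m : nat) (t : R) := sum_f_R0 (fun k => (1 - t) ^ k) m.
Definition NN (m : nat) := INR (S m).
Definition uu m x := (1 - x / NN m) ^ (S m).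
Definition qq m x := / NN m * pp m (/ NN m * x).
Definition hh x := if Req_EM_T x 0 then 1 else (1 - exp (- x)) / x.

Lemma NN_ge1 m : 1 <= NN m.
Proof. unfold NN. rewrite S_INR. generalize (pos_INR m); lra. Qed.

Lemma RInt_minus' f g a b : ex_RInt f a b -> ex_RInt g a b ->
  RInt (fun x => f x - g x) a b = RInt f a b - RInt g a b.
Proof. intros. exact (RInt_minus f g a b H H0). Qed.

Lemma ex_RInt_minus' f g a b : ex_RInt f a b -> ex_RInt g a b ->
  ex_RInt (fun x => f x - g x) a b.
Proof. intros. exact (ex_RInt_minus f g a b H H0). Qed.

Lemma ex_RInt_cont (f : R -> R) a b :
  (forall z, Rmin a b <= z <= Rmax a b -> continuous f z) -> ex_RInt f a b.
Proof. intros H. exact (@ex_RInt_continuous R_CompleteNormedModule f a b H). Qed.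

Lemma RInt_zero a b : RInt (fun _ => 0) a b = 0.
Proof. rewrite RInt_const. unfold scal; simpl. unfold mult; simpl. ring. Qed.

Lemma pp_cont m x : continuous (pp m) x.
Proof.
  induction m.
  - apply continuous_ext with (fun _ => 1). intros; unfold pp; simpl; auto.
    apply continuous_const.
  - apply continuous_ext with (fun t => plus (pp m t) ((1 - t) ^ (S m))).
    intros; reflexivity.
    apply (continuous_plus (pp m) (fun t => (1 - t) ^ (S m))). auto.
    apply (ex_derive_continuous (fun t => (1 - t) ^ (S m))). auto_derive; auto.
Qed.

Lemma int_pow k : RInt (fun t => (1 - t) ^ k) 0 1 = / INR (S k).
Proof.
  apply is_RInt_unique.
  assert (H := is_RInt_derive (fun t => - (1 - t) ^ (S k) / INR (S k)) (fun t => (1 - t) ^ k) 0 1).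
  replace (/ INR (S k)) with (minus (- (1 - 1) ^ (S k) / INR (S k)) (- (1 - 0) ^ (S k) / INR (S k))).
  apply H.
  - intros x _. assert (INR (S k) <> 0) by (apply not_0_INR; lia). auto_derive. auto.
    change (match k with 0%nat => 1 | S _ => INR k + 1 end) with (INR (S k)).
    replace (1 + - x) with (1 - x) by ring. field. auto.
  - intros x _. apply (ex_derive_continuous (fun t => (1 - t) ^ k)). auto_derive; auto.
  - change (minus ?a ?b) with (Rminus a b). replace (1 - 1) with 0 by ring. replace (1 - 0) with 1 by ring.
    rewrite pow_i, pow1 by lia.
    assert (E : - 0 / INR (S k) - - (1) / INR (S k) = / INR (S k)) by (field; apply not_0_INR; lia). exact E.
Qed.

Lemma ex_RInt_pp m a b : ex_RInt (pp m) a b.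
Proof. apply ex_RInt_cont. intros; apply pp_cont. Qed.

Lemma int_pp m : RInt (pp m) 0 1 = sum_f_R0 (fun k => / INR (S k)) m.
Proof.
  induction m.
  - change (sum_f_R0 ?f 0%nat) with (f 0%nat); cbv beta. rewrite <- (int_pow 0%nat). apply RInt_ext. intros x _. reflexivity.
  - change (sum_f_R0 ?f (S ?n)) with (sum_f_R0 f n + f (S n)); cbv beta. rewrite <- IHm, <- (int_pow (S m)).
    transitivity (RInt (fun t => plus (pp m t) ((1 - t) ^ (S m))) 0 1).
    apply RInt_ext. intros x _. reflexivity.
    assert (H2 : ex_RInt (fun t => (1 - t) ^ (S m)) 0 1).
    { apply ex_RInt_cont. intros. apply (ex_derive_continuous (fun t => (1 - t) ^ (S m))). auto_derive; auto. }
    exact (RInt_plus (pp m) (fun t => (1-t)^(S m)) 0 1 (ex_RInt_pp m 0 1) H2).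
Qed.

Lemma pp_geom m t : t * pp m t = 1 - (1 - t) ^ (S m).
Proof.
  unfold pp. assert (H := GP_finite (1 - t) m). rewrite Nat.add_1_r in H.
  replace (1 - t - 1) with (- t) in H by ring. lra.
Qed.

Lemma qq_eq m x : x <> 0 -> qq m x = (1 - uu m x) / x.
Proof.
  intros Hx. unfold qq, uu. assert (HN := NN_ge1 m).
  replace (x / NN m) with (/ NN m * x) by (unfold Rdiv; ring). rewrite <- pp_geom.
  field. split; lra.
Qed.

Lemma qq_cont m x : continuous (qq m) x.
Proof.
  unfold qq. apply (continuous_mult (fun _ => / NN m) (fun x => pp m (/ NN m * x))).
  apply continuous_const.
  apply (continuous_comp (fun x => / NN m * x) (pp m)).
  apply (ex_derive_continuous (fun x => / NN m * x)). auto_derive; auto.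
  apply pp_cont.
Qed.

Lemma ex_RInt_qq m a b : ex_RInt (qq m) a b.
Proof. apply ex_RInt_cont. intros; apply qq_cont. Qed.

Lemma int_qq_full m : RInt (qq m) 0 (NN m) = sum_f_R0 (fun k => / INR (S k)) m.
Proof.
  assert (HN := NN_ge1 m).
  assert (H := RInt_comp_lin (pp m) (/ NN m) 0 0 (NN m)).
  replace (/ NN m * 0 + 0) with 0 in H by ring.
  replace (/ NN m * NN m + 0) with 1 in H by (field; lra).
  rewrite <- int_pp, <- H by apply ex_RInt_pp.
  apply RInt_ext. intros x _. unfold qq. rewrite Rplus_0_r. reflexivity.
Qed.

Lemma expm1_bound t : 0 <= t -> exp (- t) - 1 + t <= t ^ 2.
Proof.
  intros Ht.
  destruct (MVT_gen (fun s => exp (- s) + s) 0 t (fun s => 1 - exp (- s))) as [c [Hc E]].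
  - intros x _. auto_derive; auto. ring.
  - intros x _. apply continuity_pt_filterlim. apply (ex_derive_continuous (fun s => exp (- s) + s)). auto_derive; auto.
  - rewrite Rmin_left, Rmax_right in Hc by lra.
    replace (exp (- t) - 1 + t) with ((exp (- t) + t) - (exp (- 0) + 0)) by (rewrite Ropp_0, exp_0; ring).
    rewrite E. generalize (exp_ineq1_le (- c)). intros. nra.
Qed.

Lemma pow_diff m A B : 0 <= B <= A -> A ^ (S m) - B ^ (S m) <= INR (S m) * A ^ m * (A - B).
Proof.
  intros HAB. induction m.
  - simpl. lra.
  - assert (HBA : B ^ (S m) <= A ^ (S m)) by (apply pow_incr; lra).
    assert (HA : 0 <= A ^ m) by (apply pow_le; lra).
    replace (A ^ (S (S m)) - B ^ (S (S m))) with (A * (A ^ (S m) - B ^ (S m)) + B ^ (S m) * (A - B)) by (simpl; ring).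
    rewrite S_INR. replace (A ^ (S m)) with (A * A ^ m) in * by (simpl; ring).
    assert (A * (A * A ^ m - B ^ S m) <= A * (INR (S m) * A ^ m * (A - B))) by (apply Rmult_le_compat_l; lra).
    assert (B ^ S m * (A - B) <= A * A ^ m * (A - B)) by (apply Rmult_le_compat_r; lra).
    rewrite S_INR in *. nra.
Qed.

Lemma uu_bound m x : 0 < x <= NN m ->
  0 <= exp (- x) - uu m x <= 3 * x ^ 2 * exp (- x) / NN m.
Proof.
  intros Hx. assert (HN := NN_ge1 m). set (N := NN m) in *.
  set (t := x / N). assert (Ht : 0 < t <= 1).
  { unfold t. split. apply Rdiv_lt_0_compat; lra. apply Rmult_le_reg_r with N. lra. unfold Rdiv. rewrite Rmult_assoc, Rinv_l; lra. }
  set (A := exp (- t)). set (B := 1 - t).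
  assert (HB : 0 <= B <= A) by (unfold A, B; generalize (exp_ineq1_le (- t)); lra).
  assert (HxA : exp (- x) = A ^ (S m)).
  { unfold A. rewrite <- exp_pow_INR. f_equal. fold (NN m). fold N. unfold t. field. lra. }
  assert (Hu : uu m x = B ^ (S m)) by reflexivity.
  rewrite HxA, Hu. split. assert (B ^ S m <= A ^ S m) by (apply pow_incr; lra). lra.
  assert (H1 := pow_diff m A B HB). fold (NN m) in H1. fold N in H1.
  assert (H2 : A - B <= t ^ 2) by (unfold A, B; generalize (expm1_bound t ltac:(lra)); lra).
  assert (H3 : A ^ m <= 3 * exp (- x)).
  { unfold A. rewrite <- exp_pow_INR.
    replace (INR m * - t) with (- x + t). rewrite exp_plus.
    assert (exp t <= 3). { apply Rle_trans with (exp 1). 2: apply exp_le_3.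
      destruct (Rle_lt_or_eq_dec _ _ (proj2 Ht)) as [h|h]. left; apply exp_increasing; auto. rewrite h; lra. }
    generalize (exp_pos (- x)). nra.
    unfold t. replace x with (N * (x / N)) at 1 by (field; lra). unfold N, NN in *. rewrite S_INR in *. field. lra. }
  rewrite <- HxA in H1 |- *.
  assert (HA0 : 0 <= A ^ m) by (apply pow_le; unfold A; left; apply exp_pos).
  apply Rle_trans with (N * A ^ m * t ^ 2). apply Rle_trans with (1 := H1).
  apply Rmult_le_compat_l. apply Rmult_le_pos; lra. auto.
  apply Rle_trans with (N * (3 * exp (- x)) * t ^ 2).
  apply Rmult_le_compat_r. apply pow2_ge_0. apply Rmult_le_compat_l; lra.
  right. unfold t. field. lra.
Qed.

Lemma int_xexp N : 1 <= N -> ex_RInt (fun x => x * exp (- x)) 1 N /\ RInt (fun x => x * exp (- x)) 1 N <= 1.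
Proof.
  intros HN.
  assert (H := is_RInt_derive (fun x => - (x + 1) * exp (- x)) (fun x => x * exp (- x)) 1 N).
  assert (H' : is_RInt (fun x => x * exp (- x)) 1 N (minus (- (N + 1) * exp (- N)) (- (1 + 1) * exp (- 1)))).
  { apply H. intros x _. auto_derive; auto. ring.
    intros x _. apply (ex_derive_continuous (fun x => x * exp (- x))). auto_derive; auto. }
  split. exists (minus (- (N + 1) * exp (- N)) (- (1 + 1) * exp (- 1))). exact H'.
  rewrite (is_RInt_unique _ _ _ _ H').
  change (minus ?a ?b) with (Rminus a b).
  assert (0 < exp (- N)) by apply exp_pos.
  assert (exp (- 1) <= / 2).
  { replace (-1) with (- (1)) by ring. rewrite exp_Ropp. apply Rinv_le_contravar. lra. generalize (exp_ineq1_le 1); lra. }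
  assert (E : - (N + 1) * exp (- N) - - (1 + 1) * exp (- 1) <= 1) by nra. exact E.
Qed.

Lemma int_inv N : 1 <= N -> RInt (fun x => / x) 1 N = ln N.
Proof.
  intros HN. apply is_RInt_unique.
  replace (ln N) with (minus (ln N) (ln 1)).
  apply (is_RInt_derive ln (fun x => / x) 1 N).
  intros x Hx. rewrite Rmin_left, Rmax_right in Hx by lra. auto_derive. lra. ring.
  intros x Hx. rewrite Rmin_left, Rmax_right in Hx by lra. apply (ex_derive_continuous (fun x => / x)). auto_derive. lra.
  rewrite ln_1. change (minus ?a ?b) with (Rminus a b). assert (E : ln N - 0 = ln N) by ring. exact E.
Qed.

Lemma hh_cont x : 0 <= x -> continuous hh x.
Proof.
  intros Hx. destruct Hx as [Hx|Hx].
  - apply (continuous_ext_loc hh (fun x => (1 - exp (- x)) / x) x).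
    apply (locally_interval _ x 0 p_infty); simpl; auto.
    intros y Hy _. unfold hh. destruct (Req_EM_T y 0). lra. auto.
    apply (ex_derive_continuous (fun x => (1 - exp (- x)) / x)). auto_derive. lra.
  - subst x. apply continuity_pt_filterlim.
    assert (HD : derivable_pt_lim (fun x => exp (- x)) 0 (-1)).
    { apply is_derive_Reals. auto_derive; auto. rewrite Ropp_0, exp_0. ring. }
    unfold continuity_pt, continue_in, limit1_in, limit_in. intros eps Heps.
    destruct (HD eps Heps) as [d Hd]. exists d. split. apply cond_pos.
    intros y [_ Hy]. unfold R_dist in *. simpl in *. unfold R_dist in *. rewrite Rminus_0_r in Hy.
    unfold hh. destruct (Req_EM_T y 0) as [E|E]; destruct (Req_EM_T 0 0) as [E'|E']; try lra.
    rewrite Rminus_diag, Rabs_R0; auto.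
    assert (HH := Hd y E Hy). rewrite Rplus_0_l, Ropp_0, exp_0 in HH.
    replace ((1 - exp (- y)) / y - 1) with (- ((exp (- y) - 1) / y - -1)) by (field; auto).
    rewrite Rabs_Ropp; auto.
Qed.

Ltac req := match goal with |- @eq _ ?a ?b => change (@eq R a b) end.

Lemma ex_RInt_1N (f : R -> R) N : 1 <= N -> (forall x, 1 <= x -> ex_derive f x) -> ex_RInt f 1 N.
Proof.
  intros HN H. apply ex_RInt_cont. intros z Hz. rewrite Rmin_left, Rmax_right in Hz by lra.
  apply (ex_derive_continuous f). apply H; lra.
Qed.

Definition cc m := RInt (fun x => exp (- x) / x) 1 (NN m).
Definition QQ m := RInt (qq m) 0 1.
Definition DD m := RInt (fun x => (exp (- x) - uu m x) / x) 1 (NN m).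
Definition Ih := RInt hh 0 1.

Lemma ex_uu m : ex_RInt (fun x => uu m x / x) 1 (NN m).
Proof. apply ex_RInt_1N. apply NN_ge1. intros x Hx. unfold uu. assert (HN := NN_ge1 m). auto_derive. lra. Qed.
Lemma ex_ex N : 1 <= N -> ex_RInt (fun x => exp (- x) / x) 1 N.
Proof. intros HN. apply ex_RInt_1N; auto. intros x Hx. auto_derive. lra. Qed.
Lemma ex_inv N : 1 <= N -> ex_RInt (fun x => / x) 1 N.
Proof. intros HN. apply ex_RInt_1N; auto. intros x Hx. auto_derive. lra. Qed.
Lemma ex_DD m : ex_RInt (fun x => (exp (- x) - uu m x) / x) 1 (NN m).
Proof. apply ex_RInt_1N. apply NN_ge1. intros x Hx. unfold uu. assert (HN := NN_ge1 m). auto_derive. lra. Qed.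

Lemma decomp m : sum_f_R0 (fun k => / INR (S k)) m - ln (NN m) = QQ m - cc m + DD m.
Proof.
  assert (HN := NN_ge1 m).
  rewrite <- int_qq_full. rewrite <- (RInt_Chasles (qq m) 0 1 (NN m)) by apply ex_RInt_qq.
  change (plus ?a ?b) with (Rplus a b).
  rewrite (RInt_ext (qq m) (fun x => / x - uu m x / x) 1 (NN m)).
  2: { intros x Hx. rewrite Rmin_left, Rmax_right in Hx by lra. rewrite qq_eq by lra. req. field. lra. }
  rewrite (RInt_minus' (fun x => / x) (fun x => uu m x / x) 1 (NN m)); [| apply ex_inv; lra | apply ex_uu].
  rewrite (RInt_ext (fun x => uu m x / x) (fun x => exp (- x) / x - (exp (- x) - uu m x) / x) 1 (NN m)).
  2: { intros x Hx. rewrite Rmin_left, Rmax_right in Hx by lra. req. field. lra. }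
  rewrite (RInt_minus' (fun x => exp (- x) / x) (fun x => (exp (- x) - uu m x) / x) 1 (NN m)); [| apply ex_ex; lra | apply ex_DD].
  rewrite int_inv by auto. unfold QQ, cc, DD. ring.
Qed.

Lemma DD_bound m : 0 <= DD m <= 3 / NN m.
Proof.
  assert (HN := NN_ge1 m). unfold DD. split.
  - rewrite <- (RInt_zero 1 (NN m)). apply RInt_le; auto. apply ex_RInt_cont. intros; apply continuous_const.
    apply ex_DD. intros x Hx. destruct (uu_bound m x ltac:(lra)) as [H1 H2].
    apply Rdiv_le_0_compat; lra.
  - destruct (int_xexp (NN m) HN) as [Ex Ix].
    apply Rle_trans with (RInt (fun x => 3 / NN m * (x * exp (- x))) 1 (NN m)).
    apply RInt_le; auto. apply ex_DD. exact (@ex_RInt_scal R_NormedModule (fun x => x * exp (- x)) 1 (NN m) (3 / NN m) Ex).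
    intros x Hx. destruct (uu_bound m x ltac:(lra)) as [H1 H2].
    apply Rle_trans with ((3 * x ^ 2 * exp (- x) / NN m) / x).
    unfold Rdiv. apply Rmult_le_compat_r. left; apply Rinv_0_lt_compat; lra. exact H2.
    right. field. lra.
    assert (E := RInt_scal (fun x => x * exp (- x)) 1 (NN m) (3 / NN m) Ex).
    assert (E' : RInt (fun x => 3 / NN m * (x * exp (- x))) 1 (NN m) = 3 / NN m * RInt (fun x => x * exp (- x)) 1 (NN m)) by exact E.
    rewrite E'.
    assert (0 < 3 / NN m) by (apply Rdiv_lt_0_compat; lra).
    assert (E2 : 3 / NN m * RInt (fun x => x * exp (- x)) 1 (NN m) <= 3 / NN m * 1) by (apply Rmult_le_compat_l; lra).
    lra.
Qed.

Lemma ex_hh : ex_RInt hh 0 1.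
Proof. apply ex_RInt_cont. intros z Hz. rewrite Rmin_left in Hz by lra. apply hh_cont; lra. Qed.

Lemma QQ_bound m : Ih <= QQ m <= Ih + 3 / NN m.
Proof.
  assert (HN := NN_ge1 m).
  assert (E : QQ m - Ih = RInt (fun x => qq m x - hh x) 0 1).
  { rewrite RInt_minus'; auto. apply ex_RInt_qq. apply ex_hh. }
  assert (P : forall x, 0 < x < 1 -> 0 <= qq m x - hh x <= 3 / NN m).
  { intros x Hx. destruct (uu_bound m x ltac:(lra)) as [H1 H2].
    assert (Eq : qq m x - hh x = (exp (- x) - uu m x) / x).
    { rewrite qq_eq by lra. unfold hh. destruct (Req_EM_T x 0). lra. field. lra. }
    rewrite Eq. split. apply Rdiv_le_0_compat; lra.
    assert (exp (- x) <= 1). { rewrite <- exp_0. destruct (Rle_lt_or_eq_dec (-x) 0) as [h|h]. lra. left; apply exp_increasing; auto. rewrite h; lra. }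
    assert (0 < exp (- x)) by apply exp_pos.
    apply Rle_trans with ((3 * x ^ 2 * exp (- x) / NN m) / x).
    unfold Rdiv. apply Rmult_le_compat_r. left; apply Rinv_0_lt_compat; lra. exact H2.
    replace ((3 * x ^ 2 * exp (- x) / NN m) / x) with ((3 / NN m) * (x * exp (- x))) by (field; lra).
    assert (0 < 3 / NN m) by (apply Rdiv_lt_0_compat; lra).
    assert (x * exp (- x) <= 1) by nra. 
    assert (E2 : 3 / NN m * (x * exp (- x)) <= 3 / NN m * 1) by (apply Rmult_le_compat_l; lra). lra. }
  assert (Ex : ex_RInt (fun x => qq m x - hh x) 0 1) by (apply ex_RInt_minus'; [apply ex_RInt_qq | apply ex_hh]).
  assert (L1 : 0 <= RInt (fun x => qq m x - hh x) 0 1).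
  { apply Rle_trans with (RInt (fun _ => 0) 0 1). rewrite RInt_zero; lra. apply RInt_le; auto. lra. apply ex_RInt_cont. intros; apply continuous_const.
    intros x Hx; apply P; auto. }
  assert (L2 : RInt (fun x => qq m x - hh x) 0 1 <= 3 / NN m).
  { apply Rle_trans with (RInt (fun _ => 3 / NN m) 0 1). apply RInt_le; auto. lra.
    apply ex_RInt_cont. intros; apply continuous_const. intros x Hx; apply P; auto.
    rewrite RInt_const. change (scal ?a ?b) with (Rmult a b). lra. }
  lra.
Qed.

Lemma cc_incr m : cc m <= cc (S m).
Proof.
  assert (HN := NN_ge1 m). assert (HN' : NN m <= NN (S m)) by (unfold NN; rewrite (S_INR (S m)); lra).
  unfold cc. rewrite <- (RInt_Chasles _ 1 (NN m) (NN (S m))).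
  change (plus ?a ?b) with (Rplus a b).
  assert (0 <= RInt (fun x => exp (- x) / x) (NN m) (NN (S m))).
  { rewrite <- (RInt_zero (NN m) (NN (S m))). apply RInt_le; auto. apply ex_RInt_cont. intros; apply continuous_const.
    apply ex_RInt_cont. intros z Hz. rewrite Rmin_left, Rmax_right in Hz by lra.
    apply (ex_derive_continuous (fun x => exp (- x) / x)). auto_derive. lra.
    intros x Hx. apply Rdiv_le_0_compat. left; apply exp_pos. lra. }
  lra. apply ex_ex; auto.
  apply ex_RInt_cont. intros z Hz. rewrite Rmin_left, Rmax_right in Hz by lra.
  apply (ex_derive_continuous (fun x => exp (- x) / x)). auto_derive. lra.
Qed.

Lemma cc_bound m : cc m <= 1.
Proof.
  assert (HN := NN_ge1 m). destruct (int_xexp (NN m) HN) as [Ex Ix].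
  apply Rle_trans with (2 := Ix). unfold cc. apply RInt_le; auto. apply ex_ex; auto.
  intros x Hx. assert (0 < exp (- x)) by apply exp_pos.
  assert (/ x <= x). { apply Rle_trans with 1. rewrite <- Rinv_1. apply Rinv_le_contravar; lra. lra. }
  unfold Rdiv. rewrite (Rmult_comm x). apply Rmult_le_compat_l; lra.
Qed.

Lemma lim_3N : is_lim_seq (fun m => 3 / NN m) 0.
Proof.
  assert (H := is_lim_seq_inv INR p_infty is_lim_seq_INR ltac:(discriminate)).
  simpl in H. apply is_lim_seq_incr_1 in H.
  apply (is_lim_seq_scal_l _ 3) in H. simpl in H. rewrite Rmult_0_r in H. exact H.
Qed.

Definition CC := real (Lim_seq cc).

Lemma cc_lim : is_lim_seq cc CC.
Proof.
  assert (H : ex_finite_lim_seq cc) by (apply (ex_finite_lim_seq_incr cc 1); [apply cc_incr | apply cc_bound]).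
  assert (H' := Lim_seq_correct' cc H). unfold CC.
  destruct (proj1 (ex_finite_lim_seq_correct cc) H) as [_ Hf].
  rewrite <- Hf in H'. exact H'.
Qed.

Lemma gamma_val : euler_gamma = Ih - CC.
Proof.
  unfold euler_gamma.
  assert (L : is_lim_seq (fun n => sum_f_R0 (fun k => / INR (S k)) n - ln (INR (S n))) (Ih - CC + 0)).
  { apply is_lim_seq_ext with (fun m => QQ m - cc m + DD m).
    intros m. rewrite decomp. reflexivity.
    apply is_lim_seq_plus'. apply is_lim_seq_minus'. 2: apply cc_lim.
    apply is_lim_seq_le_le with (fun _ => Ih) (fun m => Ih + 3 / NN m).
    intros; apply QQ_bound. apply is_lim_seq_const.
    assert (H := is_lim_seq_plus' _ _ Ih 0 (is_lim_seq_const Ih) lim_3N). rewrite Rplus_0_r in H. exact H.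
    apply is_lim_seq_le_le with (fun _ => 0) (fun m => 3 / NN m).
    intros; apply DD_bound. apply is_lim_seq_const. apply lim_3N. }
  rewrite (is_lim_seq_unique _ _ L). simpl. ring.
Qed.

Lemma pf_gamma (phi : R -> R) : (forall x, 0 <= x -> phi x = exp (- x)) ->
  pf_H_over_x phi = - euler_gamma.
Proof.
  intros Hphi. unfold pf_H_over_x. rewrite gamma_val.
  rewrite (RInt_ext _ (fun x => - hh x) 0 1).
  2: { intros x Hx. rewrite Rmin_left, Rmax_right in Hx by lra. rewrite !Hphi by lra.
       unfold hh. destruct (Req_EM_T x 0). lra. rewrite Ropp_0, exp_0. req. field. auto. }
  assert (E := RInt_opp hh 0 1 ex_hh).
  assert (E' : RInt (fun x => - hh x) 0 1 = - Ih) by exact E. rewrite E'.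
  assert (L : is_lim_seq (fun n => RInt (fun x => phi x / x) 1 (INR n)) CC).
  { apply is_lim_seq_incr_1. apply is_lim_seq_ext with cc. 2: apply cc_lim.
    intros n. unfold cc, NN. apply RInt_ext. intros x Hx.
    assert (0 <= Rmin 1 (INR (S n))) by (apply Rmin_glb; [lra | apply pos_INR]).
    rewrite Hphi by lra. auto. }
  unfold Lim. simpl Rbar_loc_seq. rewrite (is_lim_seq_unique _ _ L). simpl. ring.
Qed.

Lemma smooth_diff_scale (rho : R -> R) y : smooth rho -> smooth (fun x => rho (x * y) - rho x).
Proof.
  rewrite !smooth_Ck. intros H n.
  apply Ck_ext with (fun x => rho (x * y) + (-1) * rho x). intros; ring.
  apply Ck_plus. apply Ck_comp_scal; auto. apply Ck_scal; auto.
Qed.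

Theorem theorem3p1 (g : (R -> R) -> R) (a b : R) :
  tempered g ->
  supported_nonneg g ->
  (forall phi : R -> R, schwartz phi ->
     filterlim
       (fun lam => lam * (dilate g lam phi
          - (a / lam * dirac phi + b * ln lam / lam * dirac phi
             + b / lam * pf_H_over_x phi)))
       (Rbar_locally p_infty) (locally 0)) ->
  forall rho : R -> R, cutoff rho ->
    filterlim
      (fun y => laplace g rho y - (a - b * euler_gamma + b * ln (/ y)))
      (at_right 0) (locally 0).
Proof.
  intros [Hadd [Hscal _]] Hsupp Hhyp rho [Hrs [[e [He Hre]] [L HrL]]].
  set (phi := fun x => rho x * exp (- (1 * x))).
  assert (Hphis : schwartz phi) by (apply (schwartz_prod_exp rho 1 1 L (- e)); auto; lra).
  assert (Hphi0 : forall x, 0 <= x -> phi x = exp (- x)).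
  { intros x Hx. unfold phi. rewrite Hre by lra. replace (1 * x) with x by ring. ring. }
  assert (HP := pf_gamma phi Hphi0).
  assert (Hd : dirac phi = 1).
  { unfold dirac, phi. rewrite Hre by lra. rewrite Rmult_0_r, Ropp_0, exp_0. ring. }
  assert (HH := Hhyp phi Hphis). rewrite HP, Hd in HH.
  set (Hf := fun lam : R => lam * (dilate g lam phi - (a / lam * 1 + b * ln lam / lam * 1 + b / lam * - euler_gamma))) in HH.
  apply (filterlim_ext_loc (fun y => Hf (/ y))).
  2: { apply (filterlim_comp _ _ _ Rinv Hf (at_right 0) (Rbar_locally p_infty) (locally 0)).
       apply filterlim_Rinv_0_right. exact HH. }
  exists (mkposreal 1 Rlt_0_1). intros y Hy Hy0. simpl in Hy0.
  change (Rabs (y - 0) < 1) in Hy. rewrite Rminus_0_r in Hy. apply Rabs_lt_between in Hy.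
  set (F2 := fun x => rho x * exp (- (y * x))).
  set (K := fun x => (rho (x * y) - rho x) * exp (- (y * x))).
  assert (HF2 : schwartz F2) by (apply (schwartz_prod_exp rho y 1 L (- e)); auto; lra).
  assert (HK0 : forall x, x <= Rmin L (L / y) \/ - e <= x -> rho (x * y) - rho x = 0).
  { intros x [Hx|Hx].
    - assert (x <= L) by (generalize (Rmin_l L (L / y)); lra).
      assert (x <= L / y) by (generalize (Rmin_r L (L / y)); lra).
      assert (x * y <= L). { apply Rmult_le_reg_r with (/ y). apply Rinv_0_lt_compat; lra.
        rewrite Rmult_assoc, Rinv_r by lra. rewrite Rmult_1_r. exact H0. }
      rewrite !HrL by lra. ring.
    - assert (- e <= x * y) by nra. rewrite !Hre by lra. ring. }
  assert (HKs : schwartz K).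
  { apply (schwartz_prod_exp _ y 0 (Rmin L (L / y)) (- e)). apply smooth_diff_scale; auto. lra.
    intros; apply HK0; auto. intros; apply HK0; auto. }
  assert (HgK : g K = 0).
  { apply Hsupp. apply proj1 in HKs. exact HKs.
    exists (Rmin L (L / y)), (- e). split. lra. intros x Hx. unfold K. rewrite HK0; auto. ring. }
  assert (E1 : (fun x => phi (x / / y)) = (fun x => F2 x + K x)).
  { apply functional_extensionality. intros x. unfold phi, F2, K.
    replace (x / / y) with (x * y) by (field; lra). replace (1 * (x * y)) with (y * x) by ring. ring. }
  unfold Hf, dilate, laplace. fold F2. rewrite E1, Hadd, HgK by auto.
  field. lra.
Qed.
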